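(* For every positive integer $n\notin\{1,2,4\}$, $A'(n,4,3)=A(n,4,3)$. Moreover, $A'(1,4,3)=A'(2,4,3)=1$ and $A'(4,4,3)=2$.
   Context: For ${\sf u},{\sf v}\in\mathbb{F}_2^n$, $\Delta({\sf u},{\sf v})$ is the Hamming distance and ${\rm wt}({\sf u})$ the Hamming weight. $A'(n,d,e)$ denotes the maximum size of a nonempty set $S\subseteq \mathbb{F}_2^n$ such that ${\rm wt}({\sf u})\le e$ for all ${\sf u}\in S$ and $\Delta({\sf u},{\sf v})\ge d$ for all distinct ${\sf u},{\sf v}\in S$. $A(n,d,e)$ denotes the maximum size of a set $S\subseteq\mathbb{F}_2^n$ all of whose elements have weight exactly $e$ and with pairwise distances at least $d$ (the maximum size of a constant-weight code). It is known that $A(n,4,3)=\left\lfloor \frac{n}{3} \left\lfloor \frac{n-1}{2} \right\rfloor \right\rfloor-1$ if $n\equiv 5 \pmod 6$ and $A(n,4,3)=\left\lfloor \frac{n}{3} \left\lfloor \frac{n-1}{2} \right\rfloor \right\rfloor$ otherwise. *)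

(* Defs.v *)
From mathcomp Require Import all_boot.
Set Implicit Arguments. Unset Strict Implicit. Unset Printing Implicit Defensive.

Definition word (n : nat) := {ffun 'I_n -> bool}.

Definition wt n (u : word n) : nat := #|[set i | u i]|.
Definition hdist n (u v : word n) : nat := #|[set i | u i != v i]|.

Definition min_dist_ge n (d : nat) (S : {set word n}) : bool :=
  [forall u in S, forall v in S, (u != v) ==> (d <= hdist u v)].

Definition Aprime (n d e : nat) : nat :=
  \max_(S : {set word n} | (S != set0) && [forall u in S, wt u <= e] && min_dist_ge d S)
     #|S|.

Definition Acw (n d e : nat) : nat :=
  \max_(S : {set word n} | [forall u in S, wt u == e] && min_dist_ge d S) #|S|.

(* Main.v *)
Require Import Defs.
From mathcomp Require Import all_boot.
From mathcomp Require Import zify.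
From Stdlib Require Import Lia.
Set Implicit Arguments. Unset Strict Implicit. Unset Printing Implicit Defensive.

Section Gen.
Variable T : finType.

Lemma card3 (a b c : T) : a != b -> a != c -> b != c -> #|[set a; b; c]| = 3.
Proof.
move=> hab hac hbc; rewrite setUC cardsU1 cardsU1 cards1 !inE.
by rewrite (eq_sym c a) (eq_sym c b) (negbTE hac) (negbTE hbc) hab.
Qed.

Lemma card4 (a b c d : T) : a != b -> a != c -> a != d -> b != c -> b != d -> c != d ->
  #|[set a; b; c; d]| = 4.
Proof.
move=> hab hac had hbc hbd hcd.
rewrite setUC cardsU1 card3 // !inE.
by rewrite (eq_sym d a) (eq_sym d b) (eq_sym d c) (negbTE had) (negbTE hbd) (negbTE hcd).
Qed.

Lemma le1 (X Y : {set T}) :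
  (forall u v, u \in X -> v \in X -> u \in Y -> v \in Y -> u = v) -> #|X :&: Y| <= 1.
Proof.
move=> h; rewrite leqNgt; apply/negP => /card_gt1P [u [v [hu hv huv]]].
move: hu hv; rewrite !inE => /andP[h1 h2] /andP[h3 h4].
by move/eqP: huv; apply; apply: h.
Qed.

Lemma pair_in (X Y : {set T}) u v : u != v -> u \in X -> v \in X -> u \in Y -> v \in Y ->
  1 < #|X :&: Y|.
Proof.
move=> huv h1 h2 h3 h4; apply/card_gt1P; exists u, v; by rewrite !inE h1 h2 h3 h4.
Qed.

Lemma disj0 (X Y : {set T}) u : #|X :&: Y| = 0 -> u \in X -> u \in Y -> False.
Proof.
move/eqP; rewrite cards_eq0 => /eqP h hx hy.
have : u \in X :&: Y by rewrite inE hx hy.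
by rewrite h inE.
Qed.

Lemma exists_out (A : {set T}) : #|A| < #|T| -> exists u, u \notin A.
Proof.
move=> h; apply/existsP; rewrite -negb_forall; apply/negP => /forallP hA.
have : #|T| <= #|A| by rewrite -cardsT subset_leq_card //; apply/subsetP => u _; apply: hA.
by rewrite leqNgt h.
Qed.

End Gen.

Definition sup n (u : word n) : {set 'I_n} := [set i | u i].
Definition mk n (A : {set 'I_n}) : word n := [ffun i => i \in A].

Lemma supK n (A : {set 'I_n}) : sup (mk A) = A.
Proof. by apply/setP => i; rewrite inE ffunE. Qed.

Lemma mkK n (u : word n) : mk (sup u) = u.
Proof. by apply/ffunP => i; rewrite ffunE inE. Qed.

Lemma sup_inj n : injective (@sup n).
Proof. by move=> u v h; rewrite -(mkK u) -(mkK v) h. Qed.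

Lemma mk_inj n : injective (@mk n).
Proof. by move=> u v h; rewrite -(supK u) -(supK v) h. Qed.

Lemma wtE n (u : word n) : wt u = #|sup u|.
Proof. by []. Qed.

Lemma hdistE n (u v : word n) :
  hdist u v = #|sup u| + #|sup v| - 2 * #|sup u :&: sup v|.
Proof.
rewrite /hdist.
have -> : [set i | u i != v i] = (sup u :\: sup v) :|: (sup v :\: sup u).
  by apply/setP => i; rewrite !inE; case: (u i); case: (v i).
rewrite cardsU.
have -> : (sup u :\: sup v) :&: (sup v :\: sup u) = set0.
  by apply/setP => i; rewrite !inE; case: (u i); case: (v i).
rewrite cards0 subn0 !cardsD (setIC (sup v)).
have h1 : #|sup u :&: sup v| <= #|sup u| by apply: subset_leq_card; apply: subsetIl.
have h2 : #|sup u :&: sup v| <= #|sup v| by apply: subset_leq_card; apply: subsetIr.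
move: h1 h2; move: #|sup u :&: sup v| #|sup u| #|sup v| => a b c; lia.
Qed.

Lemma hdist_le n (u v : word n) : hdist u v <= n.
Proof. by rewrite /hdist -[X in _ <= X]card_ord max_card. Qed.

Lemma card_sum n (P : pred 'I_n) : #|[set i | P i]| = \sum_i (P i : nat).
Proof.
rewrite -sum1_card big_mkcond /=; apply: eq_bigr => i _; rewrite inE.
by case: (P i).
Qed.

Lemma hdist3 n (u v w : word n) : hdist u v + hdist v w + hdist u w <= 2 * n.
Proof.
rewrite /hdist !card_sum -!big_split /=.
rewrite -[X in _ <= 2 * X]card_ord -sum1_card big_distrr /=.
apply: leq_sum => i _.
by case: (u i); case: (v i); case: (w i).
Qed.

Lemma mdP n d (S : {set word n}) :
  reflect (forall u v, u \in S -> v \in S -> u != v -> d <= hdist u v) (min_dist_ge d S).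
Proof.
apply: (iffP forall_inP) => h.
  move=> u v hu hv huv; move: (h u hu) => /forall_inP /(_ v hv) /implyP; exact.
move=> u hu; apply/forall_inP => v hv; apply/implyP; exact: h.
Qed.

Lemma Aprime_small n : 0 < n -> n < 4 -> Aprime n 4 3 = 1.
Proof.
move=> n0 n4; apply/eqP; rewrite eqn_leq; apply/andP; split.
  apply/bigmax_leqP => S /andP[/andP[_ _] /mdP md].
  rewrite leqNgt; apply/negP => /card_gt1P [u [v [hu hv huv]]].
  have := md u v hu hv huv; have := hdist_le u v; lia.
set w0 : word n := [ffun _ => false].
apply: (@leq_trans #|[set w0]|); first by rewrite cards1.
apply: leq_bigmax_cond.
apply/andP; split; [apply/andP; split|].
- by apply/set0Pn; exists w0; rewrite inE.
- apply/forall_inP => u; rewrite inE => /eqP ->.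
  rewrite /wt (_ : [set i | w0 i] = set0) ?cards0 //.
  by apply/setP => i; rewrite !inE ffunE.
- apply/mdP => u v; rewrite !inE => /eqP -> /eqP ->; by rewrite eqxx.
Qed.

Lemma Aprime4 : Aprime 4 4 3 = 2.
Proof.
apply/eqP; rewrite eqn_leq; apply/andP; split.
  apply/bigmax_leqP => S /andP[/andP[_ _] /mdP md].
  rewrite leqNgt; apply/negP => /card_gt2P [u [v [w [[hu hv hw] [huv hvw hwu]]]]].
  have := md u v hu hv huv; have := md v w hv hw hvw.
  have := md u w hu hw; rewrite eq_sym => /(_ hwu).
  have := hdist3 u v w; lia.
set A : {set 'I_4} := [set (inord 0); (inord 1)].
set B : {set 'I_4} := [set (inord 2); (inord 3)].
have hA : #|A| = 2.
  by rewrite cards2 (_ : (inord 0 : 'I_4) != inord 1) //; apply/eqP => /(congr1 val); rewrite /= !inordK.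
have hB : #|B| = 2.
  by rewrite cards2 (_ : (inord 2 : 'I_4) != inord 3) //; apply/eqP => /(congr1 val); rewrite /= !inordK.
have hAB : A :&: B = set0.
  apply/setP => i; rewrite !inE; apply/negP => /andP[h1 h2].
  by move: h1 h2 => /orP[]/eqP-> /orP[]/eqP/(congr1 val); rewrite /= !inordK.
have AB : A != B by apply/eqP => e; move: hAB; rewrite e setIid => e'; move: hB; rewrite e' cards0.
apply: (@leq_trans #|[set mk A; mk B]|).
  by rewrite cards2 (inj_eq (@mk_inj 4)) AB.
apply: leq_bigmax_cond.
apply/andP; split; [apply/andP; split|].
- by apply/set0Pn; exists (mk A); rewrite !inE eqxx.
- by apply/forall_inP => u; rewrite !inE => /orP[]/eqP ->; rewrite wtE supK ?hA ?hB.
- apply/mdP => u v; rewrite !inE => /orP[]/eqP -> /orP[]/eqP ->; rewrite ?eqxx // => _;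
  rewrite hdistE !supK ?hAB 1?setIC ?hAB cards0 ?hA ?hB. all: try done.
Qed.

Lemma Acw_le n : Acw n 4 3 <= Aprime n 4 3.
Proof.
apply/bigmax_leqP => S /andP[/forall_inP w3 md].
case: (boolP (S == set0)) => [/eqP -> | ne]; first by rewrite cards0.
apply: leq_bigmax_cond; rewrite ne md andbT /=.
by apply/forall_inP => u /w3 /eqP ->.
Qed.

Lemma memneq (T : finType) (X : {set T}) a b : a \in X -> b \notin X -> a != b.
Proof. by move=> ha hb; apply/eqP => e; move: hb; rewrite -e ha. Qed.

Lemma card4le (T : finType) (a b c d : T) : #|[set a; b; c; d]| <= 4.
Proof.
have -> : #|[set a; b; c; d]| = #|[:: a; b; c; d]|.
  by apply: eq_card => u; rewrite !inE !orbA.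
exact: (card_size [:: a; b; c; d]).
Qed.

Section Main.
Variable n : nat.
Variable C : {set {set 'I_n}}.
Hypothesis hsz : forall A, A \in C -> #|A| <= 3.
Hypothesis hd : forall A B, A \in C -> B \in C -> A != B -> 4 <= #|A| + #|B| - 2 * #|A :&: B|.

Definition pk (D : {set {set 'I_n}}) :=
  forall A B, A \in D -> B \in D -> A != B -> #|A :&: B| <= 1.

Lemma pkU X Y : pk X -> pk Y ->
  (forall A B, A \in X -> B \in Y -> A != B -> #|A :&: B| <= 1) -> pk (X :|: Y).
Proof.
move=> hX hY hXY A B; rewrite !inE => /orP[hA|hA] /orP[hB|hB] hAB.
- exact: hX.
- exact: hXY.
- by rewrite setIC; apply: hXY; rewrite // eq_sym.
- exact: hY.
Qed.

Lemma facts A B : A \in C -> B \in C -> A != B ->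
  [/\ 4 <= #|A| + #|B| - 2 * #|A :&: B|, #|A| <= 3, #|B| <= 3,
      #|A :&: B| <= #|A| & #|A :&: B| <= #|B|].
Proof.
move=> hA hB hAB; split; [exact: hd | exact: hsz | exact: hsz | |];
  by apply: subset_leq_card; rewrite ?subsetIl ?subsetIr.
Qed.

Lemma pk3 A B : A \in C -> B \in C -> #|A| = 3 -> #|B| = 3 -> A != B -> #|A :&: B| <= 1.
Proof.
move=> hA hB h1 h2 hAB; have [] := facts hA hB hAB; rewrite h1 h2.
move: #|A :&: B| => i; lia.
Qed.

Lemma up B D u v : B \in C -> D \in C -> #|B| = 3 -> #|D| = 3 -> u != v ->
  u \in B -> v \in B -> u \in D -> v \in D -> B = D.
Proof.
move=> hB hD h1 h2 huv h3 h4 h5 h6; apply/eqP; apply/negPn/negP => hBD.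
have := pk3 hB hD h1 h2 hBD; have := pair_in huv h3 h4 h5 h6.
move: #|B :&: D| => i; lia.
Qed.

Lemma third (B : {set 'I_n}) a b : #|B| = 3 -> exists c, [/\ c \in B, c != a & c != b].
Proof.
move=> h.
have : 0 < #|B :\: [set a; b]|.
  rewrite cardsD h; have : #|B :&: [set a; b]| <= 2.
    apply: leq_trans (subset_leq_card (subsetIr _ _)) _; rewrite cards2; by case: (a != b).
  move: #|B :&: [set a; b]| => i; lia.
case/card_gt0P => c; rewrite !inE => /andP[/norP[h1 h2] h3]; by exists c.
Qed.

End Main.

Ltac brute := apply: le1 => ? ?; rewrite !inE;
  move=> /orP[/orP[]|]/eqP ? /orP[/orP[]|]/eqP ? /orP[/orP[]|]/eqP ? /orP[/orP[]|]/eqP ?;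
  congruence.

Lemma news (T : finType) (s p x x' q y z : T) :
  s <> p -> s <> x -> s <> x' -> s <> q -> s <> y -> s <> z ->
  p <> x -> p <> x' -> p <> q -> p <> y -> p <> z ->
  x <> x' -> x <> q -> x <> y -> x <> z ->
  x' <> q -> x' <> y -> x' <> z ->
  q <> y -> q <> z -> y <> z ->
  #|[set s; p; x] :&: [set s; q; x']| <= 1 /\
  #|[set s; p; x] :&: [set p; x'; y]| <= 1 /\
  #|[set s; p; x] :&: [set s; y; z]| <= 1 /\
  #|[set s; q; x'] :&: [set p; x'; y]| <= 1 /\
  #|[set s; q; x'] :&: [set s; y; z]| <= 1 /\
  #|[set p; x'; y] :&: [set s; y; z]| <= 1.
Proof.
move=> *; do 5 (split; first brute); brute.
Qed.



Section Surg.
Variable n : nat.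
Variable C : {set {set 'I_n}}.
Hypothesis hsz : forall A, A \in C -> #|A| <= 3.
Hypothesis hd : forall A B, A \in C -> B \in C -> A != B -> 4 <= #|A| + #|B| - 2 * #|A :&: B|.

Lemma surgery s : 2 < n -> n != 4 -> [set s] \in C ->
  (forall B, B \in C -> B != [set s] -> #|B| = 3 /\ s \notin B) ->
  (forall x y, x != y -> x != s -> y != s -> exists2 B, B \in C & (x \in B) && (y \in B)) ->
  exists C' : {set {set 'I_n}}, (forall A, A \in C' -> #|A| = 3) /\ pk C' /\ #|C| <= #|C'|.
Proof.
move=> n2 n4 hA0 hoth cover.
set A0 := [set s] in hA0 hoth.
have cov : forall x y, x != y -> x != s -> y != s ->
    exists B, [/\ B \in C, x \in B, y \in B, #|B| = 3 & s \notin B].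
  move=> x y hxy hx hy; have [B hB /andP[xB yB]] := cover x y hxy hx hy.
  have BA : B != A0 by apply/eqP => e; move: xB; rewrite e inE (negbTE hx).
  by have [h1 h2] := hoth B hB BA; exists B.
have [p [x [hp hx hpx]]] : exists p x, [/\ p \in [set~ s], x \in [set~ s] & p != x].
  apply/card_gt1P; rewrite cardsC1 card_ord; lia.
rewrite !inE in hp hx.
have [B1 [hB1 pB1 xB1 sz1 sB1]] := cov _ _ hpx hp hx.
have [x' [x'B1 hx'p hx'x]] := third p x sz1.
have up' := up hsz hd.
have x's : x' != s by apply: memneq x'B1 sB1.
have c4 : #|s |: B1| = 4 by rewrite cardsU1 sB1 sz1.
have n5 : 4 < n.
  have := max_card (s |: B1); rewrite c4 card_ord => h; by rewrite ltn_neqAle eq_sym n4 h.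
have [q hq] : exists q, q \notin s |: B1 by apply: exists_out; rewrite c4 card_ord.
rewrite !inE negb_or in hq; case/andP: hq => hqs qB1.
have hqx' : q != x' by rewrite eq_sym; apply: memneq x'B1 qB1.
have [B2 [hB2 qB2 x'B2 sz2 sB2]] := cov _ _ hqx' hqs x's.
have [y [yB2 hyq hyx']] := third q x' sz2.
have B12 : B1 != B2 by apply/eqP => e; move: qB1; rewrite e qB2.
have yB1 : y \notin B1.
  apply/negP => yB1; move/eqP: B12; apply; apply: (up' _ _ x' y) => //; by rewrite eq_sym.
have hys : y != s by apply: memneq yB2 sB2.
have hpy : p != y by apply: memneq pB1 yB1.
have [B3 [hB3 pB3 yB3 sz3 sB3]] := cov _ _ hpy hp hys.
have [z [zB3 hzp hzy]] := third p y sz3.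
have pB2 : p \notin B2.
  apply/negP => pB2; move/eqP: B12; apply; apply: (up' _ _ p x') => //; by rewrite eq_sym.
have B13 : B1 != B3 by apply/eqP => e; move: yB1; rewrite e yB3.
have B23 : B2 != B3 by apply/eqP => e; move: pB2; rewrite e pB3.
have zB1 : z \notin B1.
  apply/negP => zB1; move/eqP: B13; apply; apply: (up' _ _ p z) => //; by rewrite eq_sym.
have zB2 : z \notin B2.
  apply/negP => zB2; move/eqP: B23; apply; apply: (up' _ _ y z) => //; by rewrite eq_sym.
have hzs : z != s by apply: memneq zB3 sB3.
have d1 : s != x by rewrite eq_sym.
have d2 : s != p by rewrite eq_sym.
have d3 : s != x' by rewrite eq_sym.
have d4 : s != q by rewrite eq_sym.
have d5 : s != y by rewrite eq_sym.
have d6 : s != z by rewrite eq_sym.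
have d7 : p != x' by rewrite eq_sym.
have d8 : p != q by apply: memneq pB1 qB1.
have d9 : p != z by rewrite eq_sym.
have d10 : x != x' by rewrite eq_sym.
have d11 : x != q by apply: memneq xB1 qB1.
have d12 : x != y by apply: memneq xB1 yB1.
have d13 : x != z by apply: memneq xB1 zB1.
have d14 : x' != y by rewrite eq_sym.
have d15 : x' != z by apply: memneq x'B1 zB1.
have d16 : q != y by rewrite eq_sym.
have d17 : q != z by apply: memneq qB2 zB2.
have d18 : y != z by rewrite eq_sym.
have d19 : x' != q by rewrite eq_sym.
have P : forall (a b : 'I_n), a != b -> a <> b by move=> a b /eqP.
have [h12 [h13 [h14 [h23 [h24 h34]]]]] := news (P _ _ d2) (P _ _ d1) (P _ _ d3) (P _ _ d4)
  (P _ _ d5) (P _ _ d6) (P _ _ hpx) (P _ _ d7) (P _ _ d8) (P _ _ hpy) (P _ _ d9)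
  (P _ _ d10) (P _ _ d11) (P _ _ d12) (P _ _ d13) (P _ _ d19)
  (P _ _ d14) (P _ _ d15) (P _ _ d16) (P _ _ d17) (P _ _ d18).
set N1 := [set s; p; x] in h12 h13 h14 *.
set N2 := [set s; q; x'] in h12 h23 h24 *.
set N3 := [set p; x'; y] in h13 h23 h34 *.
set N4 := [set s; y; z] in h14 h24 h34 *.
have sN1 : #|N1| = 3 by apply: card3.
have sN2 : #|N2| = 3 by apply: card3.
have sN3 : #|N3| = 3 by apply: card3.
have sN4 : #|N4| = 3 by apply: card3.
have nd : forall X Y : {set 'I_n}, #|X| = 3 -> #|X :&: Y| <= 1 -> X != Y.
  by move=> X Y hX hXY; apply/eqP => e; move: hXY; rewrite -e setIid hX.
set R := [set A0; B1; B2; B3].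
set News := [set N1; N2; N3; N4].
set Old := C :\: R.
have oldP : forall B, B \in Old -> [/\ B \in C, #|B| = 3, s \notin B & [/\ B != B1, B != B2 & B != B3]].
  move=> B; rewrite !inE negb_or negb_or negb_or => /andP[/andP[/andP[/andP[h0 h1] h2] h3] hB].
  by have [e1 e2] := hoth B hB h0; split => //; split.
have hBj : forall B, B \in Old -> forall Bj, Bj \in [set B1; B2; B3] ->
    forall a b, a \in Bj -> b \in Bj -> a \in B -> b \in B -> a = b.
  move=> B hB Bj hBj a b h1 h2 h3 h4; case: (eqVneq a b) => // hab.
  have [hBC szB sB [nB1 nB2 nB3]] := oldP B hB.
  move: hBj; rewrite !inE => /orP[/orP[]|]/eqP e; subst Bj.
  - by move/eqP: nB1; case; apply: (up' _ _ a b).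
  - by move/eqP: nB2; case; apply: (up' _ _ a b).
  - by move/eqP: nB3; case; apply: (up' _ _ a b).
have m1 : B1 \in [set B1; B2; B3] by rewrite !inE eqxx.
have m2 : B2 \in [set B1; B2; B3] by rewrite !inE eqxx orbT.
have m3 : B3 \in [set B1; B2; B3] by rewrite !inE eqxx orbT.
have cross : forall N B, N \in News -> B \in Old -> #|N :&: B| <= 1.
  move=> N B hN hB; have [_ _ sB _] := oldP B hB.
  have g1 := hBj B hB B1 m1; have g2 := hBj B hB B2 m2; have g3 := hBj B hB B3 m3.
  move: hN; rewrite !inE => /orP[/orP[/orP[]|]|]/eqP->; apply: le1 => u v;
  rewrite /N1 /N2 /N3 /N4 !inE => /orP[/orP[]|]/eqP-> /orP[/orP[]|]/eqP-> hu hv;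
  first [ done | by move: sB; rewrite hu | by move: sB; rewrite hv
        | exact: (g1 _ _ _ _ hu hv) | exact: (g2 _ _ _ _ hu hv) | exact: (g3 _ _ _ _ hu hv) ].
have pkN : pk News.
  move=> X Y; rewrite !inE => /orP[/orP[/orP[]|]|]/eqP-> /orP[/orP[/orP[]|]|]/eqP->;
  rewrite ?eqxx // => _; by rewrite 1?setIC.
have pkO : pk Old.
  move=> X Y hX hY hXY; have [hX' sX _ _] := oldP X hX; have [hY' sY _ _] := oldP Y hY.
  exact: (pk3 hsz hd).
exists (Old :|: News); split; last split.
- move=> X; rewrite inE => /orP[/oldP[] // | ].
  by rewrite !inE => /orP[/orP[/orP[]|]|]/eqP->.
- apply: pkU => //.
  by move=> X Y hX hY _; rewrite setIC; apply: cross.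
have ON : Old :&: News = set0.
  apply/setP => X; rewrite in_setI in_set0; apply/negP => /andP[hX hN].
  have [_ _ sX _] := oldP X hX.
  have g := hBj X hX B1 m1 p x' pB1 x'B1.
  move: hN sX g; rewrite !inE => /orP[/orP[/orP[]|]|]/eqP->; rewrite /N1 /N2 /N3 /N4 !inE ?eqxx //.
  by rewrite orbT => _ /(_ isT isT) /eqP; rewrite (negbTE d7).
have cN : #|News| = 4.
  apply: card4; apply: nd => //; by rewrite setIC.
rewrite cardsU ON cards0 subn0 cN -(cardsID R C).
rewrite -/Old [X in _ <= X]addnC leq_add2r.
exact: leq_trans (subset_leq_card (subsetIr C R)) (card4le A0 B1 B2 B3).
Qed.
End Surg.

Section Pairs.
Variable n : nat.
Variable C : {set {set 'I_n}}.
Hypothesis hsz : forall A, A \in C -> #|A| <= 3.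
Hypothesis hd : forall A B, A \in C -> B \in C -> A != B -> 4 <= #|A| + #|B| - 2 * #|A :&: B|.
Hypothesis n2 : 2 < n.
Hypothesis n4 : n != 4.
Variable A0 : {set 'I_n}.
Hypothesis hA0 : A0 \in C.
Hypothesis sA0 : #|A0| = 2.

Let P := [set B in C | #|B| == 2].
Let Tt := C :\: P.

Lemma F2 B D : B \in C -> D \in C -> #|B| = 2 -> B != D -> 2 <= #|D| /\ #|B :&: D| = 0.
Proof.
move=> hB hD sB hBD; have [] := facts hsz hd hB hD hBD; rewrite sB.
move: #|D| #|B :&: D| => d i; lia.
Qed.

Lemma Tt3 D : D \in Tt -> D \in C /\ #|D| = 3.
Proof.
rewrite !inE negb_and => /andP[/orP[h|h] hD]; first by rewrite hD in h.
split => //; case: (eqVneq A0 D) => [e|ne]; first by move: h; rewrite -e sA0.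
have [h1 _] := F2 hA0 hD sA0 ne; have h3 := hsz hD; move: h h1 h3.
move: #|D| => d /eqP; lia.
Qed.

Lemma PC B : B \in P -> B \in C /\ #|B| = 2.
Proof. by rewrite inE => /andP[h /eqP]. Qed.

Lemma disjP B D : B \in P -> D \in C -> B != D -> #|B :&: D| = 0.
Proof. by move=> /PC[hB sB] hD ne; have [] := F2 hB hD sB ne. Qed.

Lemma cardC : #|C| = #|Tt| + #|P|.
Proof.
rewrite -(cardsID P C) addnC; congr (_ + _).
by rewrite (setIidPr _) //; apply/subsetP => B; rewrite inE => /andP[].
Qed.

Lemma pkT : pk Tt.
Proof.
move=> X Y hX hY ne; have [hX' sX] := Tt3 hX; have [hY' sY] := Tt3 hY.
exact: (pk3 hsz hd).
Qed.

Lemma TnotP D B : D \in Tt -> B \in P -> B \subset D -> False.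
Proof.
move=> hD hB sub; have [hD' sD] := Tt3 hD; have [_ sB] := PC hB.
have ne : B != D by apply/eqP => e; move: sD; rewrite -e sB.
have := disjP hB hD' ne; rewrite (setIidPl sub) sB.
by [].
Qed.

Lemma imgL (Q : {set {set 'I_n}}) c : Q \subset P -> (forall B, B \in Q -> c \notin B) ->
  [/\ (forall A, A \in Tt :|: [set c |: B | B in Q] -> #|A| = 3),
      pk (Tt :|: [set c |: B | B in Q]),
      #|Tt :|: [set c |: B | B in Q]| = #|Tt| + #|Q| &
      forall X, X \in [set c |: B | B in Q] -> exists2 B, B \in Q & X = c |: B].
Proof.
move=> QP hc.
set Im := [set c |: B | B in Q].
have QP' : forall B, B \in Q -> B \in P by move=> B hB; apply: (subsetP QP).
have inj : {in Q &, injective (fun B => c |: B)}.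
  move=> B D hB hD /setP e; apply/setP => u.
  have := e u; rewrite /= !inE.
  case: (eqVneq u c) => [->|]; last by [].
  by rewrite (negbTE (hc _ hB)) (negbTE (hc _ hD)).
have imP : forall X, X \in Im -> exists2 B, B \in Q & X = c |: B.
  by move=> X /imsetP.
split => //.
- move=> X; rewrite inE => /orP[/Tt3[] // | /imP[B hB ->]].
  by rewrite cardsU1 (hc _ hB) (PC (QP' _ hB)).2.
- apply: pkU; first exact: pkT.
  + move=> X Y /imP[B hB ->] /imP[D hD ->] ne.
    have ne' : B != D by apply: contraNneq ne => ->.
    have := disjP (QP' _ hB) (PC (QP' _ hD)).1 ne'.
    move=> h0; apply: le1 => u v; rewrite !inE.
    case: (eqVneq u c) => [->|huc]; case: (eqVneq v c) => [->|hvc] //=;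
      rewrite ?(negbTE huc) ?(negbTE hvc) /= => *; exfalso; apply: (disj0 h0); eassumption.
  + move=> X Y hX /imP[B hB ->] ne.
    have [hX' _] := Tt3 hX.
    have neB : B != X by apply/eqP => e; apply: (TnotP hX (QP' _ hB)); rewrite e.
    have h0 := disjP (QP' _ hB) hX' neB.
    apply: le1 => u v; rewrite !inE.
    case: (eqVneq u c) => [->|huc]; case: (eqVneq v c) => [->|hvc] //=;
      rewrite ?(negbTE huc) ?(negbTE hvc) /= => *; exfalso; apply: (disj0 h0); eassumption.
- rewrite cardsU.
  have -> : Tt :&: Im = set0.
    apply/setP => X; rewrite in_setI in_set0; apply/negP => /andP[hX /imP[B hB e]].
    by apply: (TnotP hX (QP' _ hB)); rewrite e subsetUr.
  by rewrite cards0 subn0 card_in_imset.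
Qed.

Lemma caseA c : (forall B, B \in P -> c \notin B) ->
  exists C' : {set {set 'I_n}}, (forall A, A \in C' -> #|A| = 3) /\ pk C' /\ #|C| <= #|C'|.
Proof.
move=> hc; have [h1 h2 h3 _] := imgL (subxx P) hc.
by exists (Tt :|: [set c |: B | B in P]); split => //; split => //; rewrite h3 cardC.
Qed.

Lemma inP B D u : B \in P -> D \in P -> u \in B -> u \in D -> B = D.
Proof.
move=> hB hD uB uD; apply/eqP; apply/negPn/negP => ne.
exact: (disj0 (disjP hB (PC hD).1 ne) uB uD).
Qed.

Lemma caseB : (forall c, exists2 B, B \in P & c \in B) ->
  exists C' : {set {set 'I_n}}, (forall A, A \in C' -> #|A| = 3) /\ pk C' /\ #|C| <= #|C'|.
Proof.
move=> cover.
have A0P : A0 \in P by rewrite inE hA0 sA0.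
have /cards2P [a1 [b1 [hab eA]]] : #|A0| == 2 by rewrite sA0.
have a1A : a1 \in A0 by rewrite eA !inE eqxx.
have b1A : b1 \in A0 by rewrite eA !inE eqxx orbT.
have [c cA] : exists c, c \notin A0 by apply: exists_out; rewrite sA0 card_ord.
have [P2 hP2 cP2] := cover c.
have P2A : P2 != A0 by apply/eqP => e; move: cA; rewrite -e cP2.
have c4 : #|A0 :|: P2| = 4.
  rewrite cardsU sA0 (PC hP2).2 (disjP A0P (PC hP2).1) //; by rewrite eq_sym.
have [d dAP] : exists d, d \notin A0 :|: P2.
  apply: exists_out; rewrite c4 card_ord.
  have := max_card (A0 :|: P2); rewrite c4 card_ord => h; by rewrite ltn_neqAle eq_sym n4 h.
rewrite inE negb_or in dAP; case/andP: dAP => dA dP2.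
have [P3 hP3 dP3] := cover d.
have P3A : P3 != A0 by apply/eqP => e; move: dA; rewrite -e dP3.
have P32 : P3 != P2 by apply/eqP => e; move: dP2; rewrite -e dP3.
set Q := P :\ A0.
have QP : Q \subset P by apply: subsetDl.
have hQ : forall B, B \in Q -> B \in P /\ B != A0.
  by move=> B; rewrite in_setD1 => /andP[ne hB].
have ha1 : forall B, B \in Q -> a1 \notin B.
  move=> B /hQ[hB ne]; apply/negP => a1B; move/eqP: ne; apply; exact: (inP hB A0P a1B a1A).
have [h1 h2 h3 imP] := imgL QP ha1.
set N := [set b1; c; d].
have hbc : b1 != c by apply: memneq b1A cA.
have hbd : b1 != d by apply: memneq b1A dA.
have hcd : c != d by apply: memneq cP2 dP2.
have hac : a1 != c by apply: memneq a1A cA.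
have had : a1 != d by apply: memneq a1A dA.
have a1N : a1 \notin N by rewrite !inE negb_or negb_or hab hac had.
have sN : #|N| = 3 by apply: card3.
have TN : forall X, X \in Tt -> forall u, u \in X -> u \in N -> False.
  move=> X hX u uX; have [hX' sX] := Tt3 hX.
  have gen : forall B, B \in P -> u \in B -> False.
    move=> B hB uB; have ne : B != X by apply/eqP => e; move: sX; rewrite -e (PC hB).2.
    exact: (disj0 (disjP hB hX' ne) uB uX).
  rewrite !inE => /orP[/orP[]|]/eqP e; subst u.
  - exact: (gen A0 A0P b1A).
  - exact: (gen P2 hP2 cP2).
  - exact: (gen P3 hP3 dP3).
exists ((Tt :|: [set a1 |: B | B in Q]) :|: [set N]); split; last split.
- move=> X; rewrite in_setU => /orP[/h1 //|]; by rewrite inE => /eqP->.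
- apply: pkU => //; first by move=> X Y; rewrite !inE => /eqP-> /eqP->; rewrite eqxx.
  move=> X Y hX; rewrite inE => /eqP-> _.
  move: hX; rewrite in_setU => /orP[hX|/imP[B hB ->]].
    apply: le1 => u v uX vX uN vN; exfalso; exact: (TN X hX u uX uN).
  have [hBP nBA] := hQ B hB.
  have b1B : b1 \notin a1 |: B.
    rewrite !inE negb_or eq_sym hab /=; apply/negP => b1B.
    by move/eqP: nBA; apply; exact: (inP hBP A0P b1B b1A).
  have cB : c \in a1 |: B -> B = P2.
    rewrite !inE eq_sym (negbTE hac) /= => cB; exact: (inP hBP hP2 cB cP2).
  have dB : d \in a1 |: B -> B = P3.
    rewrite !inE eq_sym (negbTE had) /= => dB; exact: (inP hBP hP3 dB dP3).
  apply: le1 => u v hu hv; rewrite /N !inE => /orP[/orP[]|]/eqP e1 /orP[/orP[]|]/eqP e2;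
    subst u v => //; try (by move: b1B; rewrite ?hu ?hv);
    [ have e1 := cB hu; have e2 := dB hv | have e1 := dB hu; have e2 := cB hv ];
    by move/eqP: P32; case; rewrite -e1 -e2.
- rewrite cardsU h3 cardC (cardsD1 A0 P) A0P.
  have -> : (Tt :|: [set a1 |: B | B in Q]) :&: [set N] = set0.
    apply/setP => X; rewrite in_setI in_setU in_set1 in_set0.
    apply/negP => /andP[/orP[hX|hX] /eqP eX]; subst X.
      have bN : b1 \in N by rewrite /N !inE eqxx.
      exact: (TN N hX b1 bN bN).
    have [B hB e] := imP N hX.
    by move: a1N; rewrite e !inE eqxx.
  by rewrite cards0 subn0 cards1 -/Q /= add1n addnS addn1.
Qed.

End Pairs.

Lemma mainC n (C : {set {set 'I_n}}) : 2 < n -> n != 4 ->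
  (forall A, A \in C -> #|A| <= 3) ->
  (forall A B, A \in C -> B \in C -> A != B -> 4 <= #|A| + #|B| - 2 * #|A :&: B|) ->
  exists C' : {set {set 'I_n}}, (forall A, A \in C' -> #|A| = 3) /\ pk C' /\ #|C| <= #|C'|.
Proof.
move=> n2 n4 hsz hd.
case: (boolP [exists A in C, #|A| == 0]) => [/exists_inP [A0 hA0 /eqP s0] | no0].
  have h0 : (0 < n) && (1 < n) by rewrite (ltn_trans _ n2) // (ltn_trans _ n2).
  case/andP: h0 => h0 h1.
  pose o0 := Ordinal h0; pose o1 := Ordinal h1; pose o2 := Ordinal n2.
  exists [set [set o0; o1; o2]]; split; last split.
  - by move=> X; rewrite inE => /eqP ->; apply: card3.
  - by move=> X Y; rewrite !inE => /eqP-> /eqP->; rewrite eqxx.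
  rewrite cards1; apply/card_le1P => X hX Y; rewrite !inE.
  apply/idP/idP => [hY|/eqP->//].
  suff e : forall Z, Z \in C -> Z = A0 by rewrite (e X hX) (e Y hY).
  move=> Z hZ; apply/eqP; apply/negPn/negP => ne.
  have [] := facts hsz hd hZ hA0 ne; rewrite s0.
  move: #|Z| #|Z :&: A0| => a b; lia.
case: (boolP [exists A in C, #|A| == 1]) => [/exists_inP [A0 hA0 /cards1P [s e]] | no1].
  subst A0.
  have hoth : forall B, B \in C -> B != [set s] -> #|B| = 3 /\ s \notin B.
    move=> B hB ne; rewrite eq_sym in ne; have [] := facts hsz hd hA0 hB ne.
    rewrite cards1 => h1 _ h3 h4 _.
    have i0 : #|[set s] :&: B| = 0 by move: h1 h3 h4; move: #|B| #|[set s] :&: B| => a b; lia.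
    split; first by move: h1 h3 h4; move: #|B| #|[set s] :&: B| => a b; lia.
    apply/negP => sB; apply: (disj0 i0 _ sB); by rewrite inE.
  case: (boolP [exists x, [exists y, [&& x != y, x != s, y != s &
                  [forall B in C, ~~ ((x \in B) && (y \in B))]]]]).
    case/existsP => x /existsP [y /and4P [hxy hxs hys /forall_inP hB]].
    set N := [set s; x; y].
    set Old := C :\ [set s].
    have oldP : forall B, B \in Old -> [/\ B \in C, #|B| = 3 & s \notin B].
      move=> B; rewrite in_setD1 => /andP[ne hB'].
      by have [h1 h2] := hoth B hB' ne; split.
    exists (Old :|: [set N]); split; last split.
    - move=> X; rewrite in_setU => /orP[/oldP[] // | ]; rewrite inE => /eqP->.
      by apply: card3; rewrite // eq_sym.
    - apply: pkU.
      + move=> X Y /oldP[hX sX _] /oldP[hY sY _] ne; exact: (pk3 hsz hd).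
      + by move=> X Y; rewrite !inE => /eqP-> /eqP->; rewrite eqxx.
      move=> X Y /oldP[hX _ sX]; rewrite inE => /eqP-> _.
      apply: le1 => u v hu hv; rewrite /N !inE => /orP[/orP[]|]/eqP e1 /orP[/orP[]|]/eqP e2;
        subst u v => //; try (by move: sX; rewrite ?hu ?hv);
        by move: (hB X hX); rewrite hu hv.
    - rewrite cardsU (cardsD1 [set s] C) hA0.
      have -> : Old :&: [set N] = set0.
        apply/setP => X; rewrite in_setI in_set1 in_set0.
        apply/negP => /andP[/oldP[_ _ sX] /eqP eX]; subst X.
        by move: sX; rewrite /N !inE eqxx.
      by rewrite cards0 subn0 cards1 -/Old addnC.
  move/existsPn => hcov.
  apply: (surgery hsz hd n2 n4 hA0 hoth) => x y hxy hxs hys.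
  move/existsPn: (hcov x) => /(_ y); rewrite hxy hxs hys /=.
  by move/forall_inPn => [B hB]; rewrite negbK => h; exists B.
case: (boolP [exists A in C, #|A| == 2]) => [/exists_inP [A0 hA0 /eqP s2] | no2].
  case: (boolP [exists c, [forall B in [set B in C | #|B| == 2], c \notin B]]).
    case/existsP => c /forall_inP hc.
    exact: (caseA hsz hd n2 n4 hA0 s2 hc).
  move/existsPn => hcov.
  apply: (caseB hsz hd n2 n4 hA0 s2) => c.
  by move/forall_inPn: (hcov c) => [B hB]; rewrite negbK => h; exists B.
have g0 := elimT exists_inPn no0; have g1 := elimT exists_inPn no1.
have g2 := elimT exists_inPn no2.
have g : forall A, A \in C -> #|A| = 3.
  move=> A hA; have := hsz A hA; have := g0 A hA; have := g1 A hA; have := g2 A hA.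
  move: #|A| => a /eqP h2 /eqP h1 /eqP h0 h3.
  clear -h0 h1 h2 h3; lia.
exists C; split; last split => //.
  exact: g.
move=> X Y hX hY ne; exact: (pk3 hsz hd hX hY (g X hX) (g Y hY) ne).
Qed.

Lemma Aprime_le n : 2 < n -> n != 4 -> Aprime n 4 3 <= Acw n 4 3.
Proof.
move=> n2 n4; apply/bigmax_leqP => S /andP[/andP[_ /forall_inP wts] /mdP md].
set C := (@sup n) @: S.
have cC : #|C| = #|S| by apply: card_imset; exact: sup_inj.
have hsz : forall A, A \in C -> #|A| <= 3.
  by move=> A /imsetP[u hu ->]; rewrite -wtE; apply: wts.
have hd : forall A B, A \in C -> B \in C -> A != B -> 4 <= #|A| + #|B| - 2 * #|A :&: B|.
  move=> A B /imsetP[u hu ->] /imsetP[v hv ->] ne; rewrite -hdistE; apply: md => //.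
  by apply: contraNneq ne => ->.
have [C' [h3 [hpk hle]]] := mainC n2 n4 hsz hd.
apply: (@leq_trans #|(@mk n) @: C'|).
  by rewrite (card_imset _ (@mk_inj n)) -cC.
apply: leq_bigmax_cond; apply/andP; split.
  by apply/forall_inP => u /imsetP[A hA ->]; rewrite wtE supK h3.
apply/mdP => u v /imsetP[A hA ->] /imsetP[B hB ->] ne.
have ne' : A != B by apply: contraNneq ne => ->.
rewrite hdistE !supK (h3 A hA) (h3 B hB).
have := hpk A B hA hB ne'; move: #|A :&: B| => i; lia.
Qed.

Theorem corollary2 :
  (forall n : nat, 0 < n -> n \notin [:: 1; 2; 4] -> Aprime n 4 3 = Acw n 4 3) /\
  Aprime 1 4 3 = 1 /\ Aprime 2 4 3 = 1 /\ Aprime 4 4 3 = 2.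
Proof.
split; last split; last split.
- move=> n n0; rewrite !inE => /norP[h1 /norP[h2 h4]].
  have n2 : 2 < n by move: n0 h1 h2; clear; case: n => [|[|[|n]]].
  apply/eqP; rewrite eqn_leq Acw_le andbT; exact: Aprime_le.
- exact: Aprime_small.
- exact: Aprime_small.
- exact: Aprime4.
Qed.
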